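(* Let $n\ge 2$, let $\mathbf{e}_1,\dots,\mathbf{e}_n$ be the standard basis of $\mathbb{R}^n$, $\mathbf{v}_1=(1,\dots,1)^T$, and define $\mathbf{e}_i'=\frac{1-\sqrt{n+1}}{n}\mathbf{v}_1+\sqrt{n+1}\,\mathbf{e}_i$ for $i=1,\dots,n$. Then the lattice $\mathcal{L}\subset\mathbb{R}^n$ with basis $\{\mathbf{e}_1',\dots,\mathbf{e}_n'\}$ is tame, with Lagrangian basis $\{\mathbf{e}_i'\}$, vector $\mathbf{v}_1$, and $(a,h)=(n,1)$. Moreover, for every integer $r$ with $0<|r|<n$, $\mathcal{L}_{\mathbf{v}_1}^{(r,r)}$ is a sublattice of $\mathcal{L}$ with $\mathcal{L}_{\mathbf{v}_1}^{(r,r)}\cong|r|\sqrt{n+1}\,A_n$.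
   Context: Tame lattice: a full-rank lattice $\mathcal{L}\subset\mathbb{R}^n$ with a basis $\{\mathbf{e}_1,\dots,\mathbf{e}_n\}$ (Lagrangian basis) and nonzero $\mathbf{v}_1\in\mathcal{L}\cap\mathcal{L}^*$ such that $\sum_i\mathbf{e}_i=\mathbf{v}_1$, $\langle\mathbf{e}_i,\mathbf{v}_1\rangle=1$, $\langle\mathbf{e}_i,\mathbf{e}_i\rangle=a$, $\langle\mathbf{e}_i,\mathbf{e}_j\rangle=-h$ ($i\ne j$). $\mathcal{L}^{(r,s)}_{\mathbf{v}_1}$ is the image of $\mathcal{L}$ under $\mathbf{x}\mapsto r\mathbf{x}+s\langle\mathbf{x},\mathbf{v}_1\rangle\mathbf{v}_1$. $A_n=\{\mathbf{x}\in\mathbb{Z}^{n+1}:\sum_i x_i=0\}$. $\Lambda\cong\Lambda'$ means there is a linear isometry between the real spans carrying one lattice onto the other; $c\Lambda$ denotes scaling by $c>0$. *)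

(* Defs.v *)
From HB Require Import structures.
From mathcomp Require Import all_boot all_order all_algebra.
From mathcomp Require Import reals.
Set Implicit Arguments. Unset Strict Implicit. Unset Printing Implicit Defensive.
Import Order.TTheory GRing.Theory Num.Theory.
Local Open Scope ring_scope.

Section Defs.
Variable R : realType.

Definition dot (m : nat) (u v : 'rV[R]_m) : R := \sum_(i < m) u 0 i * v 0 i.

Definition latt (k m : nat) (b : 'I_k -> 'rV[R]_m) : 'rV[R]_m -> Prop :=
  fun x => exists c : 'I_k -> int, x = \sum_(i < k) (c i)%:~R *: b i.

Definition rspan (m : nat) (L : 'rV[R]_m -> Prop) : 'rV[R]_m -> Prop :=
  fun x => exists (k : nat) (c : 'I_k -> R) (y : 'I_k -> 'rV[R]_m),
    (forall i, L (y i)) /\ x = \sum_(i < k) c i *: y i.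

Definition dual_mem (m : nat) (L : 'rV[R]_m -> Prop) (y : 'rV[R]_m) : Prop :=
  rspan L y /\ forall x, L x -> exists z : int, dot y x = z%:~R.

(* the lattice generated by b (full rank: b a basis of R^n) is tame,
   with Lagrangian basis b, vector v and parameters (a,h) *)
Definition tame_with (n : nat) (b : 'I_n -> 'rV[R]_n) (v : 'rV[R]_n) (a h : R)
  : Prop :=
  \det (\matrix_(i < n, j < n) b i 0 j) != 0 /\
  v != 0 /\ latt b v /\ dual_mem (latt b) v /\
  \sum_(i < n) b i = v /\
  (forall i, dot (b i) v = 1) /\
  (forall i, dot (b i) (b i) = a) /\
  (forall i j, i != j -> dot (b i) (b j) = - h).

(* L^{(r,s)}_v : image of L under x |-> r x + s <x,v> v *)
Definition twist (m : nat) (r s : R) (v : 'rV[R]_m) (L : 'rV[R]_m -> Prop)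
  : 'rV[R]_m -> Prop :=
  fun y => exists x, L x /\ y = r *: x + (s * dot x v) *: v.

Definition lscale (m : nat) (c : R) (L : 'rV[R]_m -> Prop) : 'rV[R]_m -> Prop :=
  fun y => exists x, L x /\ y = c *: x.

Definition A_lat (n : nat) : 'rV[R]_n.+1 -> Prop :=
  fun x => (forall i, exists z : int, x 0 i = z%:~R) /\ \sum_(i < n.+1) x 0 i = 0.

Definition lat_iso (m k : nat) (L : 'rV[R]_m -> Prop) (L' : 'rV[R]_k -> Prop)
  : Prop :=
  exists M : 'M[R]_(m, k),
    (forall x y, rspan L x -> rspan L y -> dot (x *m M) (y *m M) = dot x y) /\
    (forall x, L x -> L' (x *m M)) /\
    (forall y, L' y -> exists x, L x /\ y = x *m M).

End Defs.

(* Main.v *)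
Require Import Defs.
From HB Require Import structures.
From mathcomp Require Import all_boot all_order all_algebra.
From mathcomp Require Import reals.
From mathcomp Require Import ring lra.
Import Order.TTheory GRing.Theory Num.Theory.
Local Open Scope ring_scope.

Section Helpers.
Variable R : realType.

Lemma dotC m (u v : 'rV[R]_m) : dot u v = dot v u.
Proof. by rewrite /dot; apply: eq_bigr => i _; rewrite mulrC. Qed.

Lemma dotDl m (u w v : 'rV[R]_m) : dot (u + w) v = dot u v + dot w v.
Proof. by rewrite /dot -big_split; apply: eq_bigr => i _; rewrite mxE mulrDl. Qed.

Lemma dotZl m a (u v : 'rV[R]_m) : dot (a *: u) v = a * dot u v.
Proof. by rewrite /dot mulr_sumr; apply: eq_bigr => i _; rewrite mxE mulrA. Qed.

Lemma dotNl m (u v : 'rV[R]_m) : dot (- u) v = - dot u v.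
Proof. by rewrite -scaleN1r dotZl mulN1r. Qed.

Lemma dotBl m (u w v : 'rV[R]_m) : dot (u - w) v = dot u v - dot w v.
Proof. by rewrite dotDl dotNl. Qed.

Lemma dotDr m (u w v : 'rV[R]_m) : dot v (u + w) = dot v u + dot v w.
Proof. by rewrite dotC dotDl; congr (_ + _); apply: dotC. Qed.
Lemma dotZr m a (u v : 'rV[R]_m) : dot v (a *: u) = a * dot v u.
Proof. by rewrite dotC dotZl; congr (_ * _); apply: dotC. Qed.
Lemma dotBr m (u w v : 'rV[R]_m) : dot v (u - w) = dot v u - dot v w.
Proof. by rewrite dotC dotBl; congr (_ - _); apply: dotC. Qed.

Lemma dotNr m (u v : 'rV[R]_m) : dot v (- u) = - dot v u.
Proof. by rewrite dotC dotNl dotC. Qed.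

Lemma dot0l m (v : 'rV[R]_m) : dot 0 v = 0.
Proof. by rewrite /dot big1 // => i _; rewrite mxE mul0r. Qed.

Lemma dot_suml m (I : Type) (r : seq I) (P : pred I) (F : I -> 'rV[R]_m) v :
  dot (\sum_(i <- r | P i) F i) v = \sum_(i <- r | P i) dot (F i) v.
Proof. by elim/big_rec2: _ => [|i x y _ <-]; rewrite ?dot0l ?dotDl. Qed.

Lemma dot_dd m (i j : 'I_m) : dot (delta_mx 0 i) (delta_mx 0 j) = (i == j)%:R :> R.
Proof.
rewrite /dot (bigD1 i) //= big1 => [|k /negbTE ki]; rewrite !mxE ?eqxx ?ki ?mul1r ?mul0r ?addr0 //.
Qed.

Lemma dot_dc m (i : 'I_m) : dot (delta_mx 0 i) (const_mx 1) = 1 :> R.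
Proof.
rewrite /dot (bigD1 i) //= big1 => [|k /negbTE ki]; rewrite !mxE ?eqxx ?ki ?mul1r ?mul0r ?addr0 //.
Qed.

Lemma dot_cd m (i : 'I_m) : dot (const_mx 1) (delta_mx 0 i) = 1 :> R.
Proof. by rewrite dotC dot_dc. Qed.

Lemma dot_cc m : dot (const_mx 1 : 'rV[R]_m) (const_mx 1) = m%:R.
Proof.
rewrite /dot; under eq_bigr do rewrite !mxE mulr1.
by rewrite sumr_const card_ord.
Qed.

Lemma sum_delta m : \sum_(i < m) delta_mx 0 i = const_mx 1 :> 'rV[R]_m.
Proof.
apply/rowP => k; rewrite summxE (bigD1 k) //= big1 => [|j jk]; rewrite !mxE ?eqxx ?addr0 //.
by rewrite eq_sym (negbTE jk).
Qed.

Lemma dot_mx m (u v : 'rV[R]_m) : dot u v = (u *m v^T) 0 0.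
Proof. by rewrite /dot mxE; apply: eq_bigr => i _; rewrite mxE. Qed.

Lemma tame_part n (s : R) (e' : 'I_n -> 'rV[R]_n) :
  (2 <= n)%N -> 0 < s -> s * s = n.+1%:R ->
  (forall i, e' i = ((1 - s) / n%:R) *: const_mx 1 + s *: delta_mx 0 i) ->
  tame_with e' (const_mx 1) n%:R 1.
Proof.
move=> n2 s0 ss e'E.
have hn : n%:R = s * s - 1 :> R by rewrite ss mulrS addrC addrK.
have hn0 : s * s - 1 != 0 by rewrite -hn pnatr_eq0 -lt0n; exact: leq_trans _ n2.
have s1 : 1 + s != 0 by apply: lt0r_neq0; lra.
have sn0 : s != 0 by apply: lt0r_neq0.
have ha : (1 - s) / n%:R = - (1 + s)^-1 :> R.
  by rewrite hn; (field; rewrite ?s1 ?sn0 ?hn0 //).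
have {}e'E : forall i, e' i = (- (1 + s)^-1) *: const_mx 1 + s *: delta_mx 0 i.
  by move=> i; rewrite e'E ha.
have hsum : \sum_(i < n) e' i = const_mx 1.
  under eq_bigr do rewrite e'E.
  rewrite big_split /= sumr_const card_ord -scaler_sumr sum_delta -scaler_nat scalerA -scalerDl.
  suff -> : n%:R * - (1 + s)^-1 + s = 1 by rewrite scale1r.
  by rewrite hn; (field; rewrite ?s1 ?sn0 ?hn0 //).
have hev : forall i, dot (e' i) (const_mx 1) = 1.
  move=> i; rewrite e'E dotDl !dotZl dot_cc dot_dc hn; (field; rewrite ?s1 ?sn0 ?hn0 //).
rewrite /tame_with.
split.
  pose B := \matrix_(i < n, j < n) e' i 0 j.
  have hB : B = (- (1 + s)^-1) *: const_mx 1 + s%:M :> 'M[R]_n.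
    apply/matrixP => i j; rewrite !mxE e'E !mxE eqxx /= eq_sym mulr_natr //.
  have JJ : (const_mx 1 : 'M[R]_n) *m (const_mx 1 : 'M[R]_n) = n%:R *: const_mx 1.
    apply/matrixP => i j; rewrite !mxE; under eq_bigr do rewrite !mxE mulr1.
    by rewrite sumr_const card_ord mulr1.
  have hBC : B *m (s^-1%:M + ((1 + s)^-1 / s) *: const_mx 1) = 1%:M.
    rewrite hB mulmxDl !mulmxDr -!scalemxAl -!scalemxAr JJ !mul_mx_scalar !mul_scalar_mx.
    apply/matrixP => i j; rewrite !mxE.
    by case: (i == j); rewrite /= ?mulr1n ?mulr0n hn; (field; rewrite ?s1 ?sn0 ?hn0 //).
  have [uB _] := mulmx1_unit hBC.
  by move: uB; rewrite unitmxE unitfE.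
split.
  apply/negP => /eqP /rowP /(_ (Ordinal (leq_trans (isT : (0 < 2)%N) n2))).
  by rewrite !mxE; apply/eqP; exact: oner_neq0.
have hlv : latt e' (const_mx 1).
  by exists (fun _ => 1); rewrite -hsum; apply: eq_bigr => i _; rewrite scale1r.
split; first exact: hlv.
split.
  split; first by exists 1%N, (fun _ => 1), (fun _ => const_mx 1); split => //; rewrite big_ord1 scale1r.
  move=> x [c ->]; exists (\sum_(i < n) c i).
  rewrite dotC dot_suml rmorph_sum; apply: eq_bigr => i _.
  by rewrite dotZl hev mulr1.
split; first exact: hsum.
split; first exact: hev.
split.
  move=> i; rewrite e'E !(dotDl, dotDr, dotZl, dotZr) dot_cc dot_dc dot_cd dot_dd eqxx hn.
  rewrite /= ?mulr1n; (field; rewrite ?s1 ?sn0 ?hn0 //).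
move=> i j /negbTE ij.
rewrite !e'E !(dotDl, dotDr, dotZl, dotZr) dot_cc dot_dc dot_cd dot_dd ij hn.
rewrite /= ?mulr0n; (field; rewrite ?s1 ?sn0 ?hn0 //).
Qed.

Lemma twist_part n (s : R) (e' : 'I_n -> 'rV[R]_n) :
  (2 <= n)%N -> 0 < s -> s * s = n.+1%:R ->
  (forall i, e' i = ((1 - s) / n%:R) *: const_mx 1 + s *: delta_mx 0 i) ->
  (forall r : int, r != 0 -> `|r| < n%:Z ->
     (forall y, twist r%:~R r%:~R (const_mx 1) (latt e') y -> latt e' y) /\
     lat_iso (twist r%:~R r%:~R (const_mx 1) (latt e'))
             (lscale (`|r|%:~R * s) (@A_lat R n))).
Proof.
move=> n2 s0 ss e'E.
have hn : n%:R = s * s - 1 :> R by rewrite ss mulrS addrC addrK.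
have hn0 : s * s - 1 != 0 by rewrite -hn pnatr_eq0 -lt0n; exact: leq_trans _ n2.
have s1 : 1 + s != 0 by apply: lt0r_neq0; lra.
have sn0 : s != 0 by apply: lt0r_neq0.
have ha : (1 - s) / n%:R = - (1 + s)^-1 :> R.
  by rewrite hn; field; rewrite ?hn0 ?s1.
have {}e'E : forall i, e' i = (- (1 + s)^-1) *: const_mx 1 + s *: delta_mx 0 i.
  by move=> i; rewrite e'E ha.
have hsum : \sum_(i < n) e' i = const_mx 1.
  under eq_bigr do rewrite e'E.
  rewrite big_split /= sumr_const card_ord -scaler_sumr sum_delta -scaler_nat scalerA -scalerDl.
  suff -> : n%:R * - (1 + s)^-1 + s = 1 by rewrite scale1r.
  by rewrite hn; (field; rewrite ?s1 ?sn0 ?hn0 //).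
have hev : forall i, dot (e' i) (const_mx 1) = 1.
  move=> i; rewrite e'E dotDl !dotZl dot_cc dot_dc hn; (field; rewrite ?s1 ?sn0 ?hn0 //).
have hdot : forall c : 'I_n -> int,
    dot (\sum_(i < n) (c i)%:~R *: e' i) (const_mx 1) = (\sum_(i < n) c i)%:~R.
  move=> c; rewrite dot_suml rmorph_sum; apply: eq_bigr => i _.
  by rewrite dotZl hev mulr1.
pose W := fun j : 'I_n => widen_ord (leqnSn n) j.
have hWW : forall j l, (W j == W l) = (j == l).
  by move=> j l; apply/eqP/eqP => [/(congr1 val) /= /val_inj|->].
have hWm : forall j, (W j == ord_max) = false.
  by move=> j; apply/negbTE; rewrite -val_eqE /= neq_ltn ltn_ord.
have hmW : forall j, (ord_max == W j) = false by move=> j; rewrite eq_sym hWm.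
pose a := - (1 + s)^-1.
pose g := (1 + s)^-1 / s.
pose M0 : 'M[R]_(n, n.+1) :=
  \matrix_(j, k) ((k == W j)%:R + (a * (k == ord_max)%:R - g)).
have hrow : forall j, row j M0 = delta_mx 0 (W j) + (a *: delta_mx 0 ord_max - g *: const_mx 1).
  by move=> j; apply/rowP => k; rewrite !mxE eqxx /= mulr1.
have hsumW : \sum_(j < n) delta_mx 0 (W j) = const_mx 1 - delta_mx 0 ord_max :> 'rV[R]_n.+1.
  by rewrite -(sum_delta n.+1) big_ord_recr /= addrK.
have hMM : M0 *m M0^T = 1%:M.
  apply/matrixP => j l.
  have -> : (M0 *m M0^T) j l = dot (row j M0) (row l M0).
    by rewrite /dot mxE; apply: eq_bigr => k _; rewrite !mxE.
  rewrite !hrow !(dotDl, dotDr, dotNl, dotNr, dotZl, dotZr, dot_dd, dot_dc, dot_cd, dot_cc).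
  rewrite hWW !hWm !hmW eqxx -ss !mxE /a /g.
  by case: (j == l); rewrite /= ?mulr1n ?mulr0n; (field; rewrite ?s1 ?sn0 ?hn0 //).
have hv1M : (const_mx 1 : 'rV[R]_n) *m M0 = (const_mx 1 - delta_mx 0 ord_max)
            + n%:R *: (a *: delta_mx 0 ord_max - g *: const_mx 1).
  rewrite -sum_delta mulmx_suml; under eq_bigr do rewrite -rowE hrow.
  by rewrite big_split /= hsumW sumr_const card_ord scaler_nat.
pose w := fun i : 'I_n => delta_mx 0 (W i) - delta_mx 0 ord_max : 'rV[R]_n.+1.
have hME : forall i, (e' i + const_mx 1) *m M0 = s *: w i.
  move=> i; rewrite e'E !mulmxDl -!scalemxAl hv1M -rowE hrow.
  apply/rowP => k; rewrite !mxE /a /g hn.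
  by (field; rewrite ?s1 ?sn0 ?hn0 //).
move=> r r0 rlt.
pose sg : R := if (r < 0)%R then -1 else 1.
have hsg : r%:~R * sg = `|r|%:~R.
  rewrite /sg; case: ltP => [rn|rp].
    by rewrite ltr0_norm // intrN mulrN1.
  by rewrite ger0_norm // mulr1.
have hsgsg : sg * sg = 1 by rewrite /sg; case: ifP => _; rewrite ?mulrNN mulr1.
have hT : forall c : 'I_n -> int,
    let x := \sum_(i < n) (c i)%:~R *: e' i in
    r%:~R *: x + (r%:~R * dot x (const_mx 1)) *: const_mx 1
    = \sum_(i < n) (r%:~R * (c i)%:~R) *: (e' i + const_mx 1).
  move=> c x; rewrite /x hdot.
  under [RHS]eq_bigr do rewrite scalerDr.
  rewrite big_split /= -scaler_suml -mulr_sumr -rmorph_sum scaler_sumr.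
  by congr (_ + _); apply: eq_bigr => i _; rewrite scalerA.
have key : forall c : 'I_n -> int,
    let x := \sum_(i < n) (c i)%:~R *: e' i in
    (r%:~R *: x + (r%:~R * dot x (const_mx 1)) *: const_mx 1) *m (sg *: M0)
    = (`|r|%:~R * s) *: \sum_(i < n) (c i)%:~R *: w i.
  move=> c x; rewrite /x hT mulmx_suml scaler_sumr; apply: eq_bigr => i _.
  rewrite -scalemxAl -scalemxAr hME !scalerA -hsg; congr (_ *: _); ring.
split.
  move=> y [x [[c ->] ->]].
  exists (fun i => r * c i + r * \sum_(j < n) c j).
  rewrite hdot -hsum !scaler_sumr -big_split /=; apply: eq_bigr => i _.
  by rewrite scalerA -scalerDl intrD !intrM rmorph_sum.
exists (sg *: M0); split.
  move=> x y _ _.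
  rewrite -!scalemxAr dotZl dotZr !dot_mx trmx_mul mulmxA -(mulmxA x) hMM mulmx1.
  by rewrite mulrA hsgsg mul1r.
split.
  move=> _ [x [[c ->] ->]].
  exists (\sum_(i < n) (c i)%:~R *: w i); split; last exact: key.
  split.
    move=> k; exists (\sum_(i < n) c i * ((k == W i)%:Z - (k == ord_max)%:Z)).
    rewrite summxE rmorph_sum; apply: eq_bigr => i _.
    by rewrite !mxE rmorphM rmorphB /=.
  have -> : \sum_(k < n.+1) (\sum_(i < n) (c i)%:~R *: w i) 0 k
          = dot (\sum_(i < n) (c i)%:~R *: w i) (const_mx 1).
    by rewrite /dot; apply: eq_bigr => k _; rewrite mxE mulr1.
  rewrite dot_suml big1 // => i _.
  by rewrite dotZl /w dotBl !dot_dc subrr mulr0.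
move=> y [b [[hz hs] ->]].
have [c hc] : exists c : 'I_n -> int, forall i, b 0 (W i) = (c i)%:~R.
  exact: (fin_all_exists (fun i => hz (W i))).
exists (r%:~R *: (\sum_(i < n) (c i)%:~R *: e' i)
        + (r%:~R * dot (\sum_(i < n) (c i)%:~R *: e' i) (const_mx 1)) *: const_mx 1).
split.
  by exists (\sum_(i < n) (c i)%:~R *: e' i); split => //; exists c.
rewrite key; congr (_ *: _).
rewrite {1}(row_sum_delta b) big_ord_recr /=.
under eq_bigr do rewrite hc.
under [RHS]eq_bigr do rewrite /w scalerBr.
rewrite sumrB -scaler_suml; congr (_ + _).
move: hs; rewrite big_ord_recr /=.
under eq_bigr do rewrite hc.
move/eqP; rewrite addrC addr_eq0 => /eqP ->.
by rewrite scaleNr.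
Qed.

End Helpers.

Theorem mainTheorem8 (R : realType) (n : nat) :
  (2 <= n)%N ->
  let v1 : 'rV[R]_n := const_mx 1 in
  let e' : 'I_n -> 'rV[R]_n := fun i =>
    ((1 - Num.sqrt (n.+1)%:R) / n%:R) *: v1
    + Num.sqrt (n.+1)%:R *: delta_mx 0 i in
  tame_with e' v1 n%:R 1 /\
  (forall r : int, r != 0 -> `|r| < n%:Z ->
     (forall y, twist r%:~R r%:~R v1 (latt e') y -> latt e' y) /\
     lat_iso (twist r%:~R r%:~R v1 (latt e'))
             (lscale (`|r|%:~R * Num.sqrt (n.+1)%:R) (@A_lat R n))).
Proof.
move=> n2 v1 e'.
have s0 : 0 < Num.sqrt (n.+1)%:R :> R by rewrite sqrtr_gt0 ltr0n.
have ss : Num.sqrt (n.+1)%:R * Num.sqrt (n.+1)%:R = n.+1%:R :> R.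
  by rewrite -expr2 sqr_sqrtr // ler0n.
have e'E : forall i, e' i = ((1 - Num.sqrt (n.+1)%:R) / n%:R) *: const_mx 1
                           + Num.sqrt (n.+1)%:R *: delta_mx 0 i by [].
split; [exact: tame_part n2 s0 ss e'E | exact: twist_part n2 s0 ss e'E].
Qed.
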